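(* For one-sided matching with $n$ agents and $n$ items and unrestricted nonnegative valuations, there are deterministic algorithms achieving each of the following: (i) distortion $O(n)$ using one value query per agent; (ii) for any constant integer $k\ge1$, distortion $O(n^{1/k})$ using $O(\log n)$ queries per agent; (iii) distortion $O(1)$ using $O(\log^2 n)$ queries per agent.
   Context: One-sided matching: there is a set $N$ of $n$ agents and a set $A$ of $n$ items. Each agent $i$ has a valuation function $v_i:A\to\mathbb{R}_{\ge0}$. The algorithm receives the agents' rankings of the items consistent with their values (if $a\succ_i b$ then $v_i(a)\ge v_i(b)$). It may ask value queries returning $v_i(j)$, and it outputs a perfect matching (bijection $N\to A$). Its distortion is the worst case, over all valuation profiles, of the optimal social welfare $\max_Z\sum_i v_i(z_i)$ divided by the social welfare $\sum_i v_i(y_i)$ of the output matching. *)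

(* Defs.v *)
From HB Require Import structures.
From mathcomp Require Import all_boot all_order all_algebra all_fingroup.
From mathcomp Require Import reals exp.
Set Implicit Arguments. Unset Strict Implicit. Unset Printing Implicit Defensive.
Import Order.TTheory GRing.Theory Num.Theory.
Local Open Scope ring_scope.

Section OneSidedMatching.
Variables (R : realType) (n : nat).

(* Agents and items are both indexed by 'I_n. v i j = value of agent i for item j. *)
Definition valuation := 'I_n -> 'I_n -> R.
Definition nonneg_valuation (v : valuation) := forall i j, 0 <= v i j.

(* A ranking profile: rk i j = position (0 = best) of item j in agent i's ranking. *)
Definition ranking := 'I_n -> {perm 'I_n}.
Definition consistent (rk : ranking) (v : valuation) :=
  forall i a b, (rk i a < rk i b)%N -> v i b <= v i a.

Definition matching := {perm 'I_n}.
Definition SW (v : valuation) (M : matching) : R := \sum_(i < n) v i (M i).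
Definition OPT (v : valuation) : R := \big[Num.max/0]_(Z : matching) SW v Z.

Inductive action := Query of 'I_n & 'I_n | Output of matching.
(* history: sequence of (agent, item, answered value) *)
Definition history := seq ('I_n * 'I_n * R).
Definition algorithm := ranking -> history -> action.

Fixpoint run (A : algorithm) (rk : ranking) (v : valuation) (fuel : nat)
    (h : history) : option (history * matching) :=
  match fuel with
  | 0 => None
  | fuel'.+1 =>
      match A rk h with
      | Output M => Some (h, M)
      | Query i j => run A rk v fuel' (rcons h (i, j, v i j))
      end
  end.

Definition queries_of (h : history) (i : 'I_n) : nat :=
  count (fun q : 'I_n * 'I_n * R => q.1.1 == i) h.

(* A achieves distortion at most D using at most qb value queries per agent:
   on every nonnegative profile and every consistent ranking profile, it outputs
   a matching after asking each agent at most qb queries (hence at most n*qb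
   queries in total), and OPT <= D * SW(output). *)
Definition achieves (A : algorithm) (qb : nat) (D : R) :=
  forall (v : valuation) (rk : ranking), nonneg_valuation v -> consistent rk v ->
  exists (h : history) (M : matching),
    run A rk v (n * qb).+1 [::] = Some (h, M) /\
    (forall i, (queries_of h i <= qb)%N) /\
    OPT v <= D * SW v M.

End OneSidedMatching.

(* Main.v *)
Require Import Defs.
From HB Require Import structures.
From mathcomp Require Import all_boot all_order all_algebra all_fingroup.
From mathcomp Require Import reals exp.
From mathcomp Require Import zify ring lra.
Import Order.TTheory GRing.Theory Num.Theory.
Local Open Scope ring_scope.
Set Implicit Arguments. Unset Strict Implicit. Unset Printing Implicit Defensive.

Lemma run_more (R : realType) n (A : algorithm R n) rk v f h x k :
  run A rk v f h = Some x -> run A rk v (f + k) h = Some x.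
Proof.
elim: f h => [|f IH] h //=.
case: (A rk h) => [i j|M] //; exact: IH.
Qed.

Section Distortion.
Variables (R : realType) (n' : nat).
Local Notation n := n'.+1.

Lemma distortion_bound (v w : valuation R n) (t : 'I_n -> R) (beta : R) (L : nat)
  (M : matching n) :
  1 <= beta ->
  (forall i j, 0 <= w i j) -> (forall i j, w i j <= v i j) ->
  (forall i, 0 <= t i) -> (forall i, exists j, t i <= w i j) ->
  (forall i j, v i j <= beta * w i j + t i / beta ^+ L) ->
  (forall Z : matching n, SW w Z <= SW w M) ->
  OPT v <= (beta + n%:R / beta ^+ L) * SW v M.
Proof.
move=> b1 w0 wv t0 tw vb Mmax.
have bp : 0 < beta by apply: lt_le_trans b1.
have bLp : 0 < beta ^+ L by apply: exprn_gt0.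
set istar := [arg max_(i > ord0) t i]%O.
have hT : forall i, t i <= t istar.
  rewrite /istar; case: arg_maxP => //= i _ H j; exact: H.
have [jstar hj] := tw istar.
have hSWw : t istar <= SW w M.
  apply: le_trans hj _; apply: le_trans (Mmax (tperm istar jstar)).
  rewrite /SW (bigD1 istar) //= tpermL lerDl; apply: sumr_ge0 => i _; exact: w0.
have hwv : SW w M <= SW v M by apply: ler_sum => i _; exact: wv.
have hSW0 : 0 <= SW v M by apply: le_trans hwv; apply: le_trans hSWw.
apply: bigmax_le => [|Z _]; first by apply: mulr_ge0 => //; apply: addr_ge0;
  [apply: le_trans b1 | apply: divr_ge0 => //; apply: ltW].
have h1 : SW v Z <= beta * SW w Z + \sum_(i < n) t i / beta ^+ L.
  rewrite /SW mulr_sumr -big_split /=; apply: ler_sum => i _; exact: vb.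
have h2 : \sum_(i < n) t i / beta ^+ L <= n%:R * (t istar / beta ^+ L).
  apply: le_trans (_ : _ <= \sum_(i < n) (t istar / beta ^+ L)) _.
    by apply: ler_sum => i _; rewrite ler_pM2r ?invr_gt0.
  by rewrite sumr_const card_ord mulr_natl.
apply: le_trans h1 _; rewrite mulrDl.
apply: lerD; first by rewrite ler_pM2l //; apply: le_trans hwv.
apply: le_trans h2 _.
have -> : n%:R * (t istar / beta ^+ L) = (n%:R / beta ^+ L) * t istar.
  by rewrite mulrA mulrAC.
have hnb : 0 <= n%:R / beta ^+ L by rewrite divr_ge0 // ?ler0n // ltW.
apply: le_trans (ler_wpM2l hnb (le_trans hSWw hwv)) _.
by rewrite mulrC.
Qed.
End Distortion.

Section Algo.
Variables (R : realType) (n' : nat) (beta : R) (L : nat).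
Local Notation n := n'.+1.
Definition Sn := (trunc_log 2 n).+2.
Definition Qn := (1 + L * Sn)%N.

Record st := ST { ag : nat; ph : option (nat * nat); tv : R; lo : nat; hi : nat }.
Definition s0 := ST 0 None 0 0 n.
Definition theta (t : R) (l : nat) := t / beta ^+ l.
Definition cnt (p : option (nat * nat)) : nat :=
  if p is Some (l, c) then (1 + l.-1 * Sn + c)%N else 0%N.

Definition upd (s : st) (x : R) : st :=
  match ph s with
  | None => if L == 0%N then ST (ag s).+1 None 0 0 n
            else ST (ag s) (Some (1, 0))%N x 0 n
  | Some (l, c) =>
     if c == Sn.-1 then
       (if l == L then ST (ag s).+1 None 0 0 n
        else ST (ag s) (Some (l.+1, 0))%N (tv s) 0 n)
     else let mid := ((lo s + hi s) %/ 2)%N in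
       if theta (tv s) l <= x then ST (ag s) (Some (l, c.+1)) (tv s) mid (hi s)
       else ST (ag s) (Some (l, c.+1)) (tv s) (lo s) mid
  end.

Definition stf (h : history R n) : st := foldl (fun s e => upd s e.2) s0 h.

Definition pos (rk : ranking n) (a : 'I_n) (q : nat) : 'I_n := (rk a)^-1%g (inord q).

Definition qry (rk : ranking n) (s : st) : 'I_n * 'I_n :=
  let a := inord (ag s) in
  match ph s with
  | None => (a, pos rk a 0)
  | Some _ => (a, pos rk a ((lo s + hi s) %/ 2))
  end.

Definition west (rk : ranking n) (h : history R n) : valuation R n := fun i j =>
  \big[Num.max/0]_(e <- h | (e.1.1 == i) && (rk i j <= rk i e.1.2)%N) e.2.

Definition Mout (rk : ranking n) (h : history R n) : matching n :=
  [arg max_(Z > (1%g : matching n)) SW (west rk h) Z]%O.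

Definition Alg : algorithm R n := fun rk h =>
  let s := stf h in
  if (n <= ag s)%N then Output (Mout rk h)
  else Query (qry rk s).1 (qry rk s).2.

Fixpoint gen (rk : ranking n) (v : valuation R n) (m : nat) : history R n :=
  if m is m'.+1 then
    let h := gen rk v m' in let q := qry rk (stf h) in rcons h (q.1, q.2, v q.1 q.2)
  else [::].

Lemma stf_rcons h e : stf (rcons h e) = upd (stf h) e.2.
Proof. by rewrite /stf foldl_rcons. Qed.

Lemma size_gen rk v m : size (gen rk v m) = m.
Proof. by elim: m => //= m IH; rewrite size_rcons IH. Qed.


Section Analysis.
Variables (rk : ranking n) (v : valuation R n).
Hypothesis v0 : nonneg_valuation v.
Hypothesis hc : consistent rk v.
Hypothesis b1 : 1 <= beta.

Local Notation gen := (gen rk v).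
Local Notation pos := (pos rk).
Definition tval (i : 'I_n) := v i (pos i 0).
Definition TopIn (h : history R n) (i : 'I_n) := (i, pos i 0, tval i) \in h.
Definition Good (h : history R n) (i : 'I_n) (l : nat) := exists j,
  [/\ (i, j, v i j) \in h, theta (tval i) l <= v i j &
      forall j', theta (tval i) l <= v i j' -> (rk i j' <= rk i j)%N].
Definition Done h i := TopIn h i /\ forall l, (1 <= l <= L)%N -> Good h i l.

Definition PhInv (h : history R n) (s : st) :=
  match ph s with
  | None => True
  | Some (l, c) => let a : 'I_n := inord (ag s) in
   (1 <= l <= L)%N /\ (c < Sn)%N /\ TopIn h a /\ (forall l', (1 <= l' < l)%N -> Good h a l') /\
       tv s = tval a /\ (lo s < hi s <= n)%N /\ theta (tv s) l <= v a (pos a (lo s)) /\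
       (hi s = n \/ v a (pos a (hi s)) < theta (tv s) l) /\ (hi s - lo s <= 2 ^ (Sn.-1 - c))%N
  end.

Definition InvG (m : nat) (h : history R n) (s : st) :=
  (ag s <= n)%N /\ (ag s = n -> ph s = None) /\
      m = (ag s * Qn + cnt (ph s))%N /\ (cnt (ph s) < Qn)%N /\
      (forall i : 'I_n, queries_of h i =
        (if (i < ag s)%N then Qn else if (i == ag s :> nat) then cnt (ph s) else 0)%N) /\
      (forall i : 'I_n, (i < ag s)%N -> Done h i) /\ PhInv h s.
Definition Inv m := InvG m (gen m) (stf (gen m)).

Lemma Inv0 : Inv 0.
Proof.
rewrite /Inv /InvG /=; do 6? split => //=.
by move=> i; case: ifP.
Qed.

Lemma rk_pos a q : (q < n)%N -> (rk a (pos a q) : nat) = q.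
Proof. by move=> hq; rewrite /pos permKV inordK. Qed.

Lemma pos_rk a j : pos a (rk a j) = j.
Proof. by rewrite /pos inord_val permK. Qed.

Lemma mono a q1 q2 : (q1 <= q2 < n)%N -> v a (pos a q2) <= v a (pos a q1).
Proof.
move=> /andP[h12 h2]; case: (ltngtP q1 q2) h12 => // [lt12 _|-> _]; last by [].
by apply: hc; rewrite !rk_pos //; apply: ltn_trans h2.
Qed.

Lemma bpos : 0 < beta. Proof. by apply: lt_le_trans b1. Qed.

Lemma theta_le t l : 0 <= t -> theta t l <= t.
Proof.
move=> t0; rewrite /theta ler_pdivrMr ?exprn_gt0 ?bpos //.
by rewrite ler_peMr // exprn_ege1.
Qed.

Lemma theta_S t l : beta * theta t l.+1 = theta t l.
Proof.
have bne : beta != 0 by rewrite gt_eqF ?bpos.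
have bne2 : beta ^+ l != 0 by rewrite expf_neq0.
rewrite /theta exprS; field; exact/andP.
Qed.

Lemma theta_ge0 t l : 0 <= t -> 0 <= theta t l.
Proof. by move=> t0; rewrite divr_ge0 // exprn_ge0 // ltW ?bpos. Qed.

Lemma queries_rcons (h : history R n) (e : ('I_n * 'I_n * R)%type) i :
  queries_of (rcons h e) i = (queries_of h i + (e.1.1 == i))%N.
Proof. by rewrite /queries_of -cats1 count_cat /= addn0. Qed.

Lemma TopIn_rcons h e i : TopIn h i -> TopIn (rcons h e) i.
Proof. by rewrite /TopIn mem_rcons in_cons => ->; rewrite orbT. Qed.
Lemma Good_rcons h e i l : Good h i l -> Good (rcons h e) i l.
Proof.
case=> j [hj h1 h2]; exists j; split => //.
by rewrite mem_rcons in_cons hj orbT.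
Qed.
Lemma Done_rcons h e i : Done h i -> Done (rcons h e) i.
Proof.
case=> h1 h2; split; first exact: TopIn_rcons.
by move=> l hl; apply: Good_rcons; apply: h2.
Qed.

Lemma inord_eqE (a : nat) (i : 'I_n) : (a < n)%N -> ((inord a : 'I_n) == i) = (i == a :> nat).
Proof. by move=> ha; rewrite eq_sym -val_eqE /= inordK. Qed.

Lemma S_gt1 : (1 < Sn)%N. Proof. by []. Qed.
Lemma n_le_pow : (n <= 2 ^ (Sn.-1 - 0))%N.
Proof. by rewrite subn0 /Sn /=; apply: ltnW; apply: trunc_log_ltn. Qed.

Lemma queries_next (h : history R n) (a : nat) k Q' (e : ('I_n * 'I_n * R)%type) :
  (a < n)%N -> e.1.1 = inord a ->
  (forall i : 'I_n, queries_of h i = if (i < a)%N then Q' else if (i == a :> nat) then k else 0%N) ->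
  forall i : 'I_n, queries_of (rcons h e) i =
    if (i < a)%N then Q' else if (i == a :> nat) then k.+1 else 0%N.
Proof.
move=> an e1 hq i; rewrite queries_rcons hq e1 inord_eqE //.
case: (ltnP i a) => ia; first by rewrite (ltn_eqF ia) addn0.
by case: eqP => _; rewrite ?addn1 ?addn0.
Qed.

Lemma queries_wrap (h : history R n) (a : nat) k Q' :
  k.+1 = Q' ->
  (forall i : 'I_n, queries_of h i = if (i < a)%N then Q' else if (i == a :> nat) then k.+1 else 0%N) ->
  forall i : 'I_n, queries_of h i =
    if (i < a.+1)%N then Q' else if (i == a.+1 :> nat) then 0%N else 0%N.
Proof.
move=> kQ hq i; rewrite hq ltnS; case: (ltnP i a) => ia; first by rewrite (ltnW ia).
case: eqP => [-> //|ne]; first by rewrite leqnn.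
have -> : (i <= a)%N = false.
  by apply/negP => H; apply: ne; apply/eqP; rewrite eqn_leq H ia.
by case: ifP.
Qed.

Lemma Inv_stepG m h s :
  InvG m h s -> (ag s < n)%N ->
  let q := qry rk s in InvG m.+1 (rcons h (q.1, q.2, v q.1 q.2)) (upd s (v q.1 q.2)).
Proof.
case: s => a p t lo hi /=.
rewrite /InvG /=.
move=> [agn [agN [hm [hcnt [hq [hD hP]]]]]] an.
set A : 'I_n := inord a.
have Aa : (A : nat) = a by rewrite inordK.
case: p agN hm hcnt hq hP => [[l c]|] agN hm hcnt hq hP /=.
- rewrite /qry /upd /= -/A.
  rewrite /PhInv /= -/A in hP.
  case: hP => [hl [hc' [hT [hG [ht [hlh [hlo [hhi hd]]]]]]]].
  set mid := ((lo + hi) %/ 2)%N.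
  have hqn := @queries_next h a (cnt (Some (l, c))) Qn (A, pos A mid, v A (pos A mid)) an erefl hq.
  have lS : (l * Sn = l.-1 * Sn + Sn)%N.
    by rewrite -{1}(@prednK l) ?mulSn 1?addnC //; case/andP: hl.
  have lL : (l * Sn <= L * Sn)%N by rewrite leq_mul2r; case/andP: hl => _ ->; rewrite orbT.
  have x0 : 0 <= tval A by apply: v0.
  have [cS|cS] := eqVneq c Sn.-1.
  + have hlo1 : hi = lo.+1 by move: hd; rewrite cS subnn expn0; lia.
    have midlo : mid = lo by rewrite /mid hlo1; lia.
    have hGood : Good (rcons h (A, pos A mid, v A (pos A mid))) A l.
      exists (pos A lo); split.
      * by rewrite midlo mem_rcons in_cons eqxx.
      * by rewrite -ht.
      * move=> j' hj'; rewrite rk_pos; last by lia.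
        rewrite leqNgt; apply/negP => lt.
        have hij : (hi <= rk A j')%N by lia.
        have rkn : (rk A j' < n)%N by apply: ltn_ord.
        case: hhi => [hn|hv]; first by lia.
        have := @mono A hi (rk A j') (introT andP (conj hij rkn)); rewrite pos_rk => H.
        have := le_lt_trans (le_trans hj' H) hv.
        by rewrite -ht ltxx.
    have [lL'|lL'] := eqVneq l L.
    * rewrite /=.
      have eLS : (Qn = 1 + l.-1 * Sn + Sn)%N by rewrite /Qn -lL' lS addnA.
      split; first by [].
      split; first by [].
      split; first by rewrite hm /= mulSn eLS cS; lia.
      split; first by rewrite eLS; lia.
      split.
        apply: queries_wrap hqn; rewrite /= eLS cS; lia.
      split => //.
      move=> i; rewrite ltnS leq_eqVlt => /orP[/eqP ia|ia]; last by apply: Done_rcons; apply: hD.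
      have -> : i = A by apply: ord_inj; rewrite Aa.
      split; first exact: TopIn_rcons.
      move=> l' /andP[h1 h2]; case: (ltngtP l' l) => [ll|ll|->] //.
      - by apply: Good_rcons; apply: hG; rewrite h1.
      - by exfalso; lia.
    * rewrite /=.
      split; first exact: ltnW.
      split; first by move=> an'; exfalso; lia.
      split; first by rewrite hm /= cS lS; lia.
      split.
        have : (l.+1 <= L)%N by case/andP: hl => _ H; rewrite ltn_neqAle lL' H.
        move=> H; have H2 : (l.+1 * Sn <= L * Sn)%N by rewrite leq_mul2r H orbT.
        rewrite mulSn in H2; rewrite /= /Qn; lia.
      split.
        by move: hqn; rewrite /= lS cS; have -> : (1 + (l.-1 * Sn + Sn) + 0 = (1 + l.-1 * Sn + Sn.-1).+1)%N by lia.
      split; first by move=> i ia; apply: Done_rcons; apply: hD.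
      rewrite /PhInv /= -/A.
      split; first by case/andP: hl => _ H; rewrite ltn_neqAle lL' H.
      split; first by [].
      split; first exact: TopIn_rcons.
      split.
        move=> l' /andP[h1 h2]; rewrite ltnS leq_eqVlt in h2; case/orP: h2 => [/eqP ->|h2] //.
        by apply: Good_rcons; apply: hG; rewrite h1.
      split; first by [].
      split; first by [].
      split; first by rewrite ht; apply: theta_le.
      split; first by left.
      exact: n_le_pow.
  + have cS' : (c.+1 < Sn)%N by lia.
    have e2 : (2 ^ ((trunc_log 2 n).+1 - c) = 2 * 2 ^ ((trunc_log 2 n).+1 - c.+1))%N.
      by move: cS'; rewrite /Sn -expnS => ?; f_equal; lia.
    have mlo : (lo <= mid)%N by rewrite /mid; lia.
    have mhi : (mid < hi)%N by rewrite /mid; lia.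
    have cntS : (cnt (Some (l, c.+1)) = (cnt (Some (l, c))).+1)%N by rewrite /=; lia.
    have cntQ : (cnt (Some (l, c.+1)) < Qn)%N by rewrite /= /Qn; lia.
    case: ifP => hx /=.
    * split; first exact: ltnW.
      split; first by move=> an'; exfalso; lia.
      split; first by rewrite hm; move: cntS => /= ->; lia.
      split; first exact: cntQ.
      split; first by move=> i; rewrite hqn /= addnS.
      split; first by move=> i ia; apply: Done_rcons; apply: hD.
      rewrite /PhInv /= -/A.
      split; first by [].
      split; first by [].
      split; first exact: TopIn_rcons.
      split; first by move=> l' hl'; apply: Good_rcons; apply: hG.
      split; first by [].
      split; first by lia.
      split; first by [].
      split; first by [].
      move: hd; rewrite e2 /mid; generalize (2 ^ ((trunc_log 2 n).+1 - c.+1))%N => K; lia.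
    * have mlo' : (lo < mid)%N.
        rewrite ltn_neqAle mlo andbT; apply/eqP => E.
        by move: hx; rewrite -E hlo.
      split; first exact: ltnW.
      split; first by move=> an'; exfalso; lia.
      split; first by rewrite hm; move: cntS => /= ->; lia.
      split; first exact: cntQ.
      split; first by move=> i; rewrite hqn /= addnS.
      split; first by move=> i ia; apply: Done_rcons; apply: hD.
      rewrite /PhInv /= -/A.
      split; first by [].
      split; first by [].
      split; first exact: TopIn_rcons.
      split; first by move=> l' hl'; apply: Good_rcons; apply: hG.
      split; first by [].
      split; first by lia.
      split; first by [].
      split; first by right; rewrite ltNge hx.
      move: hd; rewrite e2 /mid; generalize (2 ^ ((trunc_log 2 n).+1 - c.+1))%N => K; lia.
- rewrite /qry /upd /= -/A.
  have x0 : 0 <= tval A by apply: v0.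
  have [L0|L0] := eqVneq L 0%N.
  + rewrite /=.
    have Q1 : Qn = 1%N by rewrite /Qn L0.
    split; first by [].
    split; first by move=> _.
    split; first by rewrite Q1 hm /=; lia.
    split; first by rewrite Q1.
    split.
      move=> i; rewrite queries_rcons hq /= inord_eqE //.
      rewrite Q1 ltnS; case: (ltnP i a) => ia.
        by rewrite (ltn_eqF ia) (ltnW ia).
      case: eqP => [-> //|ne]; first by rewrite leqnn.
      have -> : (i <= a)%N = false.
        by apply/negP => H; apply: ne; apply/eqP; rewrite eqn_leq H ia.
      by case: ifP.
    split => //.
    move=> i; rewrite ltnS leq_eqVlt => /orP[/eqP ia|ia]; last by apply: Done_rcons; apply: hD.
    have -> : i = A by apply: ord_inj; rewrite Aa.
    split; last by move=> l /andP[h1 h2]; exfalso; rewrite L0 in h2; lia.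
    by rewrite /TopIn mem_rcons in_cons /tval eqxx.
  + rewrite /=.
    have LS : (0 < L * Sn)%N by rewrite muln_gt0 lt0n L0.
    split; first exact: ltnW.
    split; first by move=> an'; exfalso; lia.
    split; first by rewrite hm /=; lia.
    split; first by rewrite /Qn /=; lia.
    split.
      move=> i; rewrite queries_rcons hq /= inord_eqE //.
      case: (ltnP i a) => ia; first by rewrite (ltn_eqF ia) addn0.
      by case: eqP.
    split; first by move=> i ia; apply: Done_rcons; apply: hD.
    rewrite /PhInv /= -/A.
    split; first by rewrite lt0n L0.
    split; first by [].
    split; first by rewrite /TopIn mem_rcons in_cons /tval eqxx.
    split; first by move=> l'; lia.
    split; first by [].
    split; first by [].
    split; first exact: theta_le.
    split; first by left.
    exact: n_le_pow.
Qed.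

Lemma gen_entries m e : e \in gen m -> e.2 = v e.1.1 e.1.2.
Proof.
elim: m => //= m IH; rewrite mem_rcons in_cons => /orP[/eqP -> //|]; exact: IH.
Qed.

Lemma Inv_all m : (m <= n * Qn)%N -> Inv m.
Proof.
elim: m => [_|m IH hm]; first exact: Inv0.
have Im := IH (ltnW hm).
have an : (ag (stf (gen m)) < n)%N.
  case: Im => [agn [agN [hm' [hcnt _]]]].
  rewrite ltn_neqAle agn andbT; apply/eqP => E.
  by move: hm'; rewrite E (agN E) /= addn0 => E'; rewrite E' ltnn in hm.
rewrite /Inv /= stf_rcons.
exact: Inv_stepG.
Qed.

Lemma ag_lt m : (m < n * Qn)%N -> (ag (stf (gen m)) < n)%N.
Proof.
move=> hm; case: (Inv_all (ltnW hm)) => [agn [agN [hm' [hcnt _]]]].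
rewrite ltn_neqAle agn andbT; apply/eqP => E.
by move: hm'; rewrite E (agN E) /= addn0 => E'; rewrite E' ltnn in hm.
Qed.

Lemma ag_end : ag (stf (gen (n * Qn))) = n.
Proof.
case: (Inv_all (leqnn _)) => [agn [agN [hm' [hcnt _]]]].
apply/eqP; rewrite eqn_leq agn /= leqNgt; apply/negP => lt.
have : (ag (stf (gen (n * Qn))) * Qn + cnt (ph (stf (gen (n * Qn)))) < n * Qn)%N.
  apply: (@leq_trans (ag (stf (gen (n * Qn))) * Qn + Qn)); first by rewrite ltn_add2l.
  by rewrite addnC -mulSn leq_mul2r lt orbT.
by rewrite -hm' ltnn.
Qed.

Lemma run_gen d f m : (m + d = n * Qn)%N ->
  run Alg rk v (d + f).+1 (gen m) = Some (gen (n * Qn), Mout rk (gen (n * Qn))).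
Proof.
elim: d m => [|d IH] m hmd.
  rewrite addn0 in hmd; rewrite /= hmd /Alg ag_end leqnn //.
have hm : (m < n * Qn)%N by rewrite -hmd addnS ltnS leq_addr.
have hf : (n <= ag (stf (gen m)))%N = false by rewrite leqNgt ag_lt.
rewrite addSn /= {1}/Alg hf /=.
have := IH m.+1; rewrite addSnnS => H; rewrite -H //.
Qed.

Lemma west_ge0 (h : history R n) i j : 0 <= west rk h i j.
Proof. exact: bigmax_ge_id. Qed.

Lemma west_le_v m i j : west rk (gen m) i j <= v i j.
Proof.
rewrite /west big_seq_cond; apply: bigmax_le; first exact: v0.
move=> e /andP[he /andP[/eqP ei hr]].
rewrite (gen_entries he) ei; move: hr; rewrite leq_eqVlt => /orP[/eqP E|lt].
  by have -> : e.1.2 = j by apply: (perm_inj (s := rk i)); apply: ord_inj; rewrite E.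
exact: hc.
Qed.

Lemma west_ge m e i j : e \in gen m -> e.1.1 = i -> (rk i j <= rk i e.1.2)%N ->
  e.2 <= west rk (gen m) i j.
Proof.
move=> he ei hr; rewrite /west; apply: (bigmax_sup_seq _ e) => //.
by rewrite ei eqxx hr.
Qed.

End Analysis.

Lemma Alg_achieves : 1 <= beta -> achieves Alg Qn (beta + n%:R / beta ^+ L).
Proof.
move=> b1 v rk v0 hc.
set h := gen rk v (n * Qn).
exists h, (Mout rk h).
have [_ [_ [_ [_ [hq [hD _]]]]]] := Inv_all v0 hc b1 (leqnn (n * Qn)).
split.
  by have := @run_gen rk v v0 hc b1 (n * Qn) 0 0 erefl; rewrite addn0 => ->.
split.
  by move=> i; rewrite hq ag_end // ltn_ord.
have bp : 0 < beta by apply: lt_le_trans b1.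
apply: (@distortion_bound _ _ v (west rk h) (tval rk v)) => //.
- by move=> i j; apply: west_ge0.
- by move=> i j; apply: west_le_v.
- by move=> i; apply: v0.
- move=> i; exists (pos rk i 0).
  have [hT _] := hD i (ltac:(rewrite ag_end //)).
  exact: (west_ge hT).
- move=> i j.
  have [_ hG] := hD i (ltac:(rewrite ag_end //)).
  have w0 : 0 <= west rk h i j by apply: west_ge0.
  have t0 : 0 <= tval rk v i by apply: v0.
  suff : forall l, (l <= L)%N -> v i j <= beta * west rk h i j \/ v i j <= theta (tval rk v i) l.
    case/(_ L (leqnn L)) => H.
      apply: le_trans H _; rewrite lerDl; exact: theta_ge0.
    apply: le_trans H _; rewrite /theta lerDr; apply: mulr_ge0 => //; exact: ltW.
  elim=> [_|l IH hl].
    right; rewrite /theta expr0 invr1 mulr1 /tval.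
    have := @mono rk v hc i 0 (rk i j); rewrite pos_rk; apply.
    exact: ltn_ord.
  case: (IH (ltnW hl)) => [H|H]; first by left.
  case: (ltP (v i j) (theta (tval rk v i) l.+1)) => H2; first by right; apply: ltW.
  left; apply: le_trans H _.
  have [j0 [hj0 th hr]] := hG l.+1 (ltac:(by rewrite /= hl)).
  rewrite -(theta_S b1); rewrite ler_pM2l //.
  apply: le_trans th _.
  exact: (west_ge hj0 erefl (hr _ H2)).
- move=> Z; rewrite /Mout; case: arg_maxP => //= M _ HM; exact: HM.
Qed.
End Algo.

Lemma achieves_mono (R : realType) n (A : algorithm R n) q q' (D D' : R) :
  achieves A q D -> (q <= q')%N -> D <= D' -> achieves A q' D'.
Proof.
move=> H hq hD v rk v0 hc; have [h [M [hr [hqs hO]]]] := H v rk v0 hc.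
exists h, M; split.
  have E : (n * q').+1 = ((n * q).+1 + (n * q' - n * q))%N.
    by rewrite addSn subnKC // leq_mul.
  by rewrite E; apply: run_more.
split; first by move=> i; apply: leq_trans (hqs i) hq.
apply: le_trans hO _; apply: ler_wpM2r => //.
by apply: sumr_ge0 => i _; apply: v0.
Qed.

Unset Implicit Arguments.

Theorem mainTheorem3 (R : realType) :
  (* (i) one query per agent, distortion O(n) *)
  (exists C : R, forall n : nat, (0 < n)%N ->
     exists A : algorithm R n, achieves A 1 (C * n%:R)) /\
  (* (ii) for each constant k >= 1: O(log n) queries per agent, distortion O(n^(1/k)) *)
  (forall k : nat, (1 <= k)%N ->
     exists (C : R) (c : nat), forall n : nat, (0 < n)%N ->
       exists A : algorithm R n,
         achieves A (c * (trunc_log 2 n).+1) (C * powR (n%:R) (k%:R)^-1)) /\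
  (* (iii) O(log^2 n) queries per agent, distortion O(1) *)
  (exists (C : R) (c : nat), forall n : nat, (0 < n)%N ->
     exists A : algorithm R n, achieves A (c * (trunc_log 2 n).+1 ^ 2) C).
Proof.
split; [|split].
- exists 2; case=> // n' _.
  exists (@Alg R n' 1 0).
  apply: achieves_mono (@Alg_achieves R n' 1 0 (lexx 1)) _ _.
  + by rewrite /Qn mul0n.
  + rewrite expr0 divr1 mulrDl mul1r lerD2r.
    by rewrite ler1n.
- move=> k k1; exists 2, (3 * k + 1)%N; case=> // n' _.
  set b : R := powR (n'.+1%:R) (k%:R)^-1.
  have n1 : 1 <= (n'.+1%:R : R) by rewrite ler1n.
  have b1 : 1 <= b.
    rewrite /b -[X in X <= _](powRr0 (n'.+1%:R : R)); apply: (ler_powR n1).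
    by rewrite invr_ge0 ler0n.
  have bk : b ^+ k = n'.+1%:R.
    rewrite /b -powR_mulrn ?powR_ge0 // -powRrM mulVf ?powRr1 ?ler0n //.
    by rewrite pnatr_eq0 -lt0n.
  exists (@Alg R n' b k).
  apply: achieves_mono (@Alg_achieves R n' b k b1) _ _.
  + rewrite /Qn /Sn; set T := trunc_log 2 n'.+1; nia.
  + rewrite bk divff ?pnatr_eq0 //; lra.
- exists 3, 3%N; case=> // n' _.
  have b2 : (1 : R) <= 2 by rewrite ler1n.
  exists (@Alg R n' 2 (trunc_log 2 n'.+1).+1).
  apply: achieves_mono (@Alg_achieves R n' 2 _ b2) _ _.
  + rewrite /Qn /Sn; set T := trunc_log 2 n'.+1; nia.
  + have hn : (n'.+1%:R : R) <= 2 ^+ (trunc_log 2 n'.+1).+1.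
      by rewrite -natrX ler_nat ltnW // trunc_log_ltn.
    have h2 : 0 < (2 : R) ^+ (trunc_log 2 n'.+1).+1 by apply: exprn_gt0.
    have : n'.+1%:R / 2 ^+ (trunc_log 2 n'.+1).+1 <= (1 : R).
      by rewrite ler_pdivrMr // mul1r.
    lra.
Qed.
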